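(* In the storage model of the context, let $(\alpha_{ij})$ be a positive solution of the linear system \[ \sum_{j=1}^{\kappa_i}\alpha_{ij}=\lambda_i\ (i=1,\dots,\mathcal K),\qquad \sum_{i=1}^{\mathcal K}\sum_{j=1}^{\kappa_i}\alpha_{ij}\,\delta_{\ell,s^i_j}=\tfrac1n\ (\ell=1,\dots,n), \] and let the embedded load chain $X^e(m)$ be constructed using the Join the Shortest Queue routing policy. Then for every $x\in\mathbb N^n$, \[ \mathbf E[f(X^e(m+1))-f(X^e(m))\mid X^e(m)=x]=-2\sum_{i=1}^{\mathcal K}\sum_{j\ne j_{\min}^{(i)}}\alpha_{ij}\bigl(x_{s^i_j}-x_{s^i_{j_{\min}}(x)}\bigr)+1-\frac1n, \] where $f(y)=\sum_{l=1}^n\bigl(y_l-\frac1n\sum_{k=1}^ny_k\bigr)^2$ and $j^{(i)}_{\min}$ is the index with $s^i_{j^{(i)}_{\min}}=s^i_{j_{\min}}(x)$.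
   Context: Storage model: $n$ nodes, non-empty neighborhoods $S_1,\dots,S_{\mathcal K}\subset\{1,\dots,n\}$ covering $\{1,\dots,n\}$, $\kappa_i=|S_i|$, $S_i=\{s^i_1,\dots,s^i_{\kappa_i}\}$ a fixed enumeration. Items arrive at $S_i$ as independent Poisson processes with rates $\lambda_i>0$, $\sum_i\lambda_i=1$. $X^e(m)\in\mathbb N^n$ is the vector of node loads after the $m$-th arrival. For $x\in\mathbb N^n$, $s^i_{j_{\min}}(x)$ is the first node of $S_i$ (in the enumeration) at which $x$ is minimal over $S_i$. Join the Shortest Queue (JSQ) routing policy: an item arriving at $S_i$ when the configuration is $x$ is stored at node $s^i_{j_{\min}}(x)$. $\delta_{\ell,m}$ is the Kronecker delta. *)

(* Defs.v *)
From mathcomp Require Import all_boot all_order all_algebra.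
Set Implicit Arguments. Unset Strict Implicit. Unset Printing Implicit Defensive.
Import Order.TTheory GRing.Theory Num.Theory.
Local Open Scope ring_scope.

(* A neighborhood S_i with its fixed enumeration
   s^i_1, ..., s^i_kappa_i is a sequence [s : seq 'I_n] (0-based positions),
   kappa_i = size s. *)

(* Kronecker delta  delta_{l, s_j}  (false if j is out of range). *)
Definition is_node {n} (s : seq 'I_n) (j : nat) (l : 'I_n) : bool :=
  nth false [seq v == l | v <- s] j.

(* load x_{s_j} of the j-th node of s (0 if out of range). *)
Definition load_at {n} (x : 'I_n -> nat) (s : seq 'I_n) (j : nat) : nat :=
  nth 0%N [seq x v | v <- s] j.

Definition jmin {n} (s : seq 'I_n) (x : 'I_n -> nat) : nat :=
  find (fun v => all (fun w => (x v <= x w)%N) s) s.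

(* JSQ routing: an item arriving at neighborhood s in configuration x is
   stored at node s_{j_min(x)}. *)
Definition jsq_route {n} (s : seq 'I_n) (x : 'I_n -> nat) : 'I_n -> nat :=
  fun l => (x l + is_node s (jmin s x) l)%N.

Definition fdev {R : realFieldType} {n} (y : 'I_n -> nat) : R :=
  \sum_(l < n) ((y l)%:R - n%:R^-1 * \sum_(k < n) (y k)%:R) ^+ 2.

(* One step of the embedded JSQ load chain: the next arrival is at
   neighborhood i with probability lam i (Poisson rates with sum 1),
   and the chain then moves deterministically to jsq_route (s i) x. *)
Definition jsq_cond_exp {R : realFieldType} {n K} (lam : 'I_K -> R)
  (s : 'I_K -> seq 'I_n) (g : ('I_n -> nat) -> R) (x : 'I_n -> nat) : R :=
  \sum_(i < K) lam i * g (jsq_route (s i) x).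

(* Main.v *)
Require Import Defs.
From mathcomp Require Import all_boot all_order all_algebra.
From mathcomp Require Import ring.
Import Order.TTheory GRing.Theory Num.Theory.
Local Open Scope ring_scope.

Lemma exists_min n (x : 'I_n -> nat) (s : seq 'I_n) : s != [::] ->
  has (fun v => all (fun w => (x v <= x w)%N) s) s.
Proof.
elim: s => // a t IH _.
case: t IH => [|b t] IH; first by rewrite /= leqnn.
have /hasP [v vin /allP vall] := IH isT.
case: (leqP (x a) (x v)) => h.
  apply/hasP; exists a; first by rewrite inE eqxx.
  apply/allP => w; rewrite inE => /orP [/eqP -> //|wi].
  exact: leq_trans h (vall w wi).
apply/hasP; exists v; first by rewrite inE vin orbT.
apply/allP => w; rewrite inE => /orP [/eqP -> |wi]; first exact: ltnW.
exact: vall.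
Qed.

Lemma jmin_lt n (s : seq 'I_n) x : s != [::] -> (jmin s x < size s)%N.
Proof. by move=> h; rewrite /jmin -has_find; apply: exists_min. Qed.

Lemma is_nodeE n (s : seq 'I_n) j l d : (j < size s)%N ->
  is_node s j l = (nth d s j == l).
Proof. by move=> h; rewrite /is_node (nth_map d). Qed.

Lemma load_atE n (s : seq 'I_n) j x d : (j < size s)%N ->
  load_at x s j = x (nth d s j).
Proof. by move=> h; rewrite /load_at (nth_map d). Qed.

Lemma fdevE (R : realFieldType) n (y : 'I_n -> nat) : (0 < n)%N ->
  fdev y = \sum_(l < n) (y l)%:R ^+ 2 - n%:R^-1 * (\sum_(l < n) (y l)%:R) ^+ 2 :> R.
Proof.
move=> n0; rewrite /fdev.
set S := \sum_(k < n) (y k)%:R : R.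
under eq_bigr do rewrite sqrrB.
rewrite !big_split /= sumrN sumr_const card_ord.
have -> : \sum_(i < n) (y i)%:R * (n%:R^-1 * S) *+ 2 = S * (n%:R^-1 * S) *+ 2.
  by rewrite sumrMnl -mulr_suml.
have nz : n%:R != 0 :> R by rewrite pnatr_eq0 -lt0n.
rewrite -[_ *+ n]mulr_natr -[_ *+ 2]mulr_natr.
field; exact: nz.
Qed.

Lemma fdev_step (R : realFieldType) n (x : 'I_n -> nat) (v : 'I_n) : 
  fdev (fun l => (x l + (v == l))%N) - fdev x =
  2 * (x v)%:R + 1 - (2 * \sum_(l < n) (x l)%:R + 1) / n%:R :> R.
Proof.
have n0 : (0 < n)%N by case: n x v => [|n] x [].
rewrite !fdevE //.
have E1 : \sum_(l < n) ((x l + (v == l))%N)%:R = \sum_(l < n) (x l)%:R + 1 :> R.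
  rewrite (bigD1 v) //= [X in _ = X + _](bigD1 v) //= eqxx natrD -!addrA; congr (_ + _).
  rewrite addrC; congr (_ + _); apply: eq_bigr => l /negPf hl.
  by rewrite eq_sym hl addn0.
have E2 : \sum_(l < n) ((x l + (v == l))%N)%:R ^+ 2 = \sum_(l < n) (x l)%:R ^+ 2 + 2 * (x v)%:R + 1 :> R.
  rewrite (bigD1 v) //= [\sum_(l < n) (x l)%:R ^+ 2](bigD1 v) //= eqxx natrD.
  have -> : \sum_(i < n | i != v) ((x i + (v == i))%N)%:R ^+ 2 = 
     \sum_(i < n | i != v) (x i)%:R ^+ 2 :> R.
    by apply: eq_bigr => l /negPf hl; rewrite eq_sym hl addn0.
  rewrite sqrrD.
  rewrite -mulr_natr /= ; ring.
rewrite E1 E2.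
have nz : n%:R != 0 :> R by rewrite pnatr_eq0 -lt0n.
field; exact: nz.
Qed.

Lemma fdev_ext (R : realFieldType) n (y z : 'I_n -> nat) :
  (forall l, y l = z l) -> fdev y = fdev z :> R.
Proof.
move=> h; rewrite /fdev (eq_bigr (fun k => (z k)%:R) (fun k _ => congr1 _ (h k))).
by apply: eq_bigr => l _; rewrite h.
Qed.

Lemma sum_delta (R : realFieldType) n (x : 'I_n -> nat) (a : 'I_n) :
  \sum_(l < n) (x l)%:R * (a == l)%:R = (x a)%:R :> R.
Proof.
rewrite (bigD1 a) //= eqxx mulr1 big1 ?addr0 // => l /negPf hl.
by rewrite eq_sym hl mulr0.
Qed.

Theorem lemma3p2 (R : realFieldType) (n K : nat)
  (s : 'I_K -> seq 'I_n) (lam : 'I_K -> R) (alpha : 'I_K -> nat -> R)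
  (Hne : forall i, s i != [::])
  (Huniq : forall i, uniq (s i))
  (Hcover : forall l : 'I_n, exists i, l \in s i)
  (Hlam : forall i, 0 < lam i)
  (Hlam1 : \sum_(i < K) lam i = 1)
  (Halpha_pos : forall i j, (j < size (s i))%N -> 0 < alpha i j)
  (Halpha_row : forall i, \sum_(0 <= j < size (s i)) alpha i j = lam i)
  (Halpha_node : forall l : 'I_n,
     \sum_(i < K) \sum_(0 <= j < size (s i)) alpha i j * (is_node (s i) j l)%:R
     = n%:R^-1)
  (x : 'I_n -> nat) :
  jsq_cond_exp lam s (fun y => fdev y - fdev x) x =
  - 2 * \sum_(i < K) \sum_(0 <= j < size (s i) | j != jmin (s i) x)
          alpha i j * ((load_at x (s i) j)%:R - (load_at x (s i) (jmin (s i) x))%:R)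
  + 1 - n%:R^-1.
Proof.
set S := \sum_(l < n) (x l)%:R : R.
have step i : fdev (jsq_route (s i) x) - fdev x =
   2 * (load_at x (s i) (jmin (s i) x))%:R + 1 - (2 * S + 1) / n%:R :> R.
  have lt := @jmin_lt _ (s i) x (Hne i).
  case E: (s i) (Hne i) lt => [//|a t] _ lt.
  rewrite (load_atE _ _ _ _ a) // /S -(@fdev_step R n x (nth a (a :: t) (jmin (a :: t) x))).
  congr (_ - _); apply: fdev_ext => l.
  by rewrite /jsq_route (is_nodeE _ _ _ _ a).
have rowL i : \sum_(0 <= j < size (s i) | j != jmin (s i) x)
          alpha i j * ((load_at x (s i) j)%:R - (load_at x (s i) (jmin (s i) x))%:R)
   = \sum_(0 <= j < size (s i)) alpha i j * \sum_(l < n) (x l)%:R * (is_node (s i) j l)%:R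
     - lam i * (load_at x (s i) (jmin (s i) x))%:R.
  rewrite big_mkcond /= -Halpha_row mulr_suml -sumrB.
  apply: eq_big_nat => j /andP [_ hj].
  case: (s i) hj => [//|a t] hj.
  under eq_bigr do rewrite (is_nodeE _ _ _ _ a) //.
  rewrite sum_delta -(load_atE _ _ _ _ a) //.
  case: eqP => [->|_] /=; first by rewrite subrr.
  by rewrite mulrBr.
have T : \sum_(i < K) \sum_(0 <= j < size (s i)) alpha i j * \sum_(l < n) (x l)%:R * (is_node (s i) j l)%:R
   = S / n%:R.
  rewrite /S mulr_suml.
  transitivity (\sum_(l < n) \sum_(i < K) \sum_(0 <= j < size (s i))
      (x l)%:R * (alpha i j * (is_node (s i) j l)%:R)); last first.
    by apply: eq_bigr => l _; rewrite -(Halpha_node l) mulr_sumr; apply: eq_bigr => i _; rewrite mulr_sumr.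
  rewrite [RHS]exchange_big /=; apply: eq_bigr => i _.
  rewrite [RHS]exchange_big /=; apply: eq_big_nat => j _.
  by rewrite mulr_sumr; apply: eq_bigr => l _; rewrite mulrCA.
rewrite /jsq_cond_exp.
under eq_bigr do rewrite step.
under [X in _ = - 2 * X + _ - _]eq_bigr do rewrite rowL.
rewrite sumrB T.
set c := (2 * S + 1) / n%:R.
have -> : \sum_i lam i * (2 * (load_at x (s i) (jmin (s i) x))%:R + 1 - c) =
   2 * \sum_i lam i * (load_at x (s i) (jmin (s i) x))%:R + (1 - c) * \sum_i lam i.
  rewrite mulr_sumr mulr_sumr -big_split; apply: eq_bigr => i _ /=; ring.
rewrite Hlam1 /c; ring.
Qed.
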